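(* Let $\alpha\in\mathbb R$ and let $(\mathfrak g_1,\varphi_1,\xi_1,\eta_1,g_1)$ and $(\mathfrak g_2,\varphi_2,\xi_2,\eta_2,g_2)$ be two almost $\alpha$-coK\''ahler (respectively, two $\alpha$-coK\''ahler) Lie algebras. For $i=1,2$ let $\mathfrak h_i=\ker\eta_i$, $J_i=\varphi_i|_{\mathfrak h_i}$, $h_i=g_i|_{\mathfrak h_i\times\mathfrak h_i}$ and $D_i=\mathrm{ad}_{\xi_i}|_{\mathfrak h_i}$, so that $(\mathfrak h_i,J_i,h_i)$ is an almost K\''ahler (respectively, K\''ahler) Lie algebra. Then the two Lie algebras $\mathfrak g_1,\mathfrak g_2$ are isomorphic as (almost) $\alpha$-coK\''ahler Lie algebras if and only if there exists an isomorphism $\psi:(\mathfrak h_1,J_1,h_1)\to(\mathfrak h_2,J_2,h_2)$ of (almost) K\''ahler Lie algebras such that $\psi\circ D_1=D_2\circ\psi$.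
   Context: For a Lie algebra, $d\eta(x,y)=-\eta([x,y])$ and $d\omega(x,y,z)=-\omega([x,y],z)-\omega([y,z],x)-\omega([z,x],y)$. An almost contact metric structure on a $(2n+1)$-dimensional Lie algebra $\mathfrak g$ is $(\varphi,\xi,\eta,g)$ with $\eta(\xi)=1$, $\varphi^2=-I+\eta\otimes\xi$, $\eta\circ\varphi=0$, $g$ positive definite with $g(\varphi x,\varphi y)=g(x,y)-\eta(x)\eta(y)$; $\Phi(x,y)=g(x,\varphi y)$. It is almost $\alpha$-coK\''ahler if $\eta\wedge\Phi^n\neq0$, $d\eta=0$, $d\Phi=2\alpha\,\eta\wedge\Phi$, and $\alpha$-coK\''ahler if moreover $N_\varphi+2d\eta\otimes\xi=0$, with $N_\varphi(x,y)=\varphi^2[x,y]+[\varphi x,\varphi y]-\varphi[\varphi x,y]-\varphi[x,\varphi y]$. An almost K\''ahler structure on a $2n$-dimensional Lie algebra is $(J,h)$, $J^2=-I$, $h$ positive definite with $h(Jx,Jy)=h(x,y)$ and $h(x,Jy)$ closed nondegenerate; K\''ahler if also $N_J=0$. Two (almost) $\alpha$-coK\''ahler Lie algebras are isomorphic if there is a Lie algebra isomorphism $\Psi:\mathfrak g_1\to\mathfrak g_2$ with $\Psi\circ\varphi_1=\varphi_2\circ\Psi$, $\eta_2\circ\Psi=\eta_1$, $\Psi\xi_1=\xi_2$ and $\Psi^*g_2=g_1$. Two (almost) K\''ahler Lie algebras are isomorphic via a Lie algebra isomorphism $\psi$ with $\psi\circ J_1=J_2\circ\psi$ and $\psi^*h_2=h_1$.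 *)

(* Defs.v *)
From HB Require Import structures.
From mathcomp Require Import all_boot all_order all_algebra all_fingroup.
From mathcomp Require Import reals.
Set Implicit Arguments. Unset Strict Implicit. Unset Printing Implicit Defensive.
Import Order.TTheory GRing.Theory Num.Theory.
Local Open Scope ring_scope.

(* Real Lie algebras are modelled as finite-dimensional real vector spaces
   (vectType R, R : realType) equipped with a bracket. *)

Section Defs.
Variable R : realType.

Definition linmap (U W : lmodType R) (f : U -> W) : Prop :=
  forall (a : R) x y, f (a *: x + y) = a *: f x + f y.

Section OneAlgebra.
Variable V : vectType R.

Definition lie_bracket (br : V -> V -> V) : Prop :=
  (forall (a : R) x y z, br (a *: x + y) z = a *: br x z + br y z) /\
  (forall (a : R) x y z, br z (a *: x + y) = a *: br z x + br z y) /\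
  (forall x, br x x = 0) /\
  (forall x y z, br x (br y z) + br y (br z x) + br z (br x y) = 0).

Record acm_structure (phi : V -> V) (xi : V) (eta : V -> R) (g : V -> V -> R)
  : Prop := {
  acm_phi_lin : linmap phi;
  acm_eta_lin : linmap (eta : V -> R^o);
  acm_g_lin : forall (a : R) x y z, g (a *: x + y) z = a * g x z + g y z;
  acm_g_sym : forall x y, g x y = g y x;
  acm_g_pos : forall x, x != 0 -> 0 < g x x;
  acm_eta_xi : eta xi = 1;
  acm_phi2 : forall x, phi (phi x) = - x + eta x *: xi;
  acm_eta_phi : forall x, eta (phi x) = 0;
  acm_compat : forall x y, g (phi x) (phi y) = g x y - eta x * eta y
}.

Definition fund_form (phi : V -> V) (g : V -> V -> R) (x y : V) : R := g x (phi y).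

(* (eta /\ Phi^n)(x_0,...,x_2n), up to a nonzero normalising constant *)
Definition eta_wedge_Phi_pow (n : nat) (eta : V -> R) (Phi : V -> V -> R)
  (x : 'I_(n.*2.+1) -> V) : R :=
  \sum_(s : 'S_(n.*2.+1))
     (-1) ^+ s * (eta (x (s ord0)) *
        \prod_(k < n) Phi (x (s (inord k.*2.+1))) (x (s (inord k.*2.+2)))).

Definition d1 (br : V -> V -> V) (eta : V -> R) (x y : V) : R := - eta (br x y).

Definition d2 (br : V -> V -> V) (om : V -> V -> R) (x y z : V) : R :=
  - om (br x y) z - om (br y z) x - om (br z x) y.

Definition wedge12 (eta : V -> R) (om : V -> V -> R) (x y z : V) : R :=
  eta x * om y z + eta y * om z x + eta z * om x y.

Definition nijenhuis (br : V -> V -> V) (phi : V -> V) (x y : V) : V :=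
  phi (phi (br x y)) + br (phi x) (phi y) - phi (br (phi x) y) - phi (br x (phi y)).

Definition almost_alpha_coKahler (alpha : R) (n : nat) (br : V -> V -> V)
  (phi : V -> V) (xi : V) (eta : V -> R) (g : V -> V -> R) : Prop :=
  [/\ \dim (fullv : {vspace V}) = n.*2.+1,
      acm_structure phi xi eta g,
      (exists x, @eta_wedge_Phi_pow n eta (fund_form phi g) x != 0),
      (forall x y, d1 br eta x y = 0) &
      (forall x y z, d2 br (fund_form phi g) x y z
                     = 2 * alpha * wedge12 eta (fund_form phi g) x y z)].

Definition alpha_coKahler (alpha : R) (n : nat) (br : V -> V -> V)
  (phi : V -> V) (xi : V) (eta : V -> R) (g : V -> V -> R) : Prop :=
  almost_alpha_coKahler alpha n br phi xi eta g /\
  (forall x y, nijenhuis br phi x y + (2 * d1 br eta x y) *: xi = 0).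

End OneAlgebra.

Definition coKahler_iso (V1 V2 : vectType R)
  (br1 : V1 -> V1 -> V1) (phi1 : V1 -> V1) (xi1 : V1) (eta1 : V1 -> R) (g1 : V1 -> V1 -> R)
  (br2 : V2 -> V2 -> V2) (phi2 : V2 -> V2) (xi2 : V2) (eta2 : V2 -> R) (g2 : V2 -> V2 -> R)
  : Prop :=
  exists Psi : V1 -> V2,
    [/\ linmap Psi, bijective Psi,
        forall x y, Psi (br1 x y) = br2 (Psi x) (Psi y),
        forall x, Psi (phi1 x) = phi2 (Psi x) &
        [/\ forall x, eta2 (Psi x) = eta1 x,
            Psi xi1 = xi2 &
            forall x y, g2 (Psi x) (Psi y) = g1 x y]].

(* The map psi : h1 -> h2
   is represented by a function V1 -> V2 whose behaviour on ker eta1 is all that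
   is constrained. *)
Definition kahler_iso_D (V1 V2 : vectType R)
  (br1 : V1 -> V1 -> V1) (phi1 : V1 -> V1) (xi1 : V1) (eta1 : V1 -> R) (g1 : V1 -> V1 -> R)
  (br2 : V2 -> V2 -> V2) (phi2 : V2 -> V2) (xi2 : V2) (eta2 : V2 -> R) (g2 : V2 -> V2 -> R)
  : Prop :=
  exists psi : V1 -> V2,
    [/\
        forall x, eta1 x = 0 -> eta2 (psi x) = 0,
        forall (a : R) x y, eta1 x = 0 -> eta1 y = 0 ->
          psi (a *: x + y) = a *: psi x + psi y,
        (forall x y, eta1 x = 0 -> eta1 y = 0 -> psi x = psi y -> x = y) /\
        (forall y, eta2 y = 0 -> exists2 x, eta1 x = 0 & psi x = y),
        forall x y, eta1 x = 0 -> eta1 y = 0 -> psi (br1 x y) = br2 (psi x) (psi y) &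
        [/\
            forall x, eta1 x = 0 -> psi (phi1 x) = phi2 (psi x),
            forall x y, eta1 x = 0 -> eta1 y = 0 -> g2 (psi x) (psi y) = g1 x y &
            forall x, eta1 x = 0 -> psi (br1 xi1 x) = br2 xi2 (psi x)]].

End Defs.

(* Main.v *)
Require Import Defs.
From HB Require Import structures.
From mathcomp Require Import all_boot all_order all_algebra all_fingroup.
From mathcomp Require Import reals.
From Stdlib Require Import ClassicalEpsilon.
Import GRing.Theory.
Set Implicit Arguments. Unset Strict Implicit.
Local Open Scope ring_scope.

Lemma lin0 (R : realType) (U W : lmodType R) (f : U -> W) : linmap f -> f 0 = 0.
Proof.
move=> h; have e := h 1 0 0; rewrite !scale1r addr0 in e.
have : f 0 + f 0 - f 0 = f 0 - f 0 by rewrite -e.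
by rewrite addrK subrr.
Qed.
Lemma linD (R : realType) (U W : lmodType R) (f : U -> W) : linmap f ->
  forall x y, f (x + y) = f x + f y.
Proof. by move=> h x y; have := h 1 x y; rewrite !scale1r. Qed.
Lemma linZ (R : realType) (U W : lmodType R) (f : U -> W) : linmap f ->
  forall a x, f (a *: x) = a *: f x.
Proof. by move=> h a x; have := h a x 0; rewrite !addr0 (lin0 h) addr0. Qed.
Lemma linB (R : realType) (U W : lmodType R) (f : U -> W) : linmap f ->
  forall x y, f (x - y) = f x - f y.
Proof. by move=> h x y; rewrite (linD h) -scaleN1r (linZ h) scaleN1r. Qed.

Lemma etaD (R : realType) (V : vectType R) (eta : V -> R) :
  linmap (eta : V -> R^o) -> forall x y, eta (x + y) = eta x + eta y.
Proof. move=> h x y; exact: (linD h). Qed.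
Lemma etaZ (R : realType) (V : vectType R) (eta : V -> R) :
  linmap (eta : V -> R^o) -> forall a x, eta (a *: x) = a * eta x.
Proof. move=> h a x; exact: (linZ h). Qed.
Lemma etaB (R : realType) (V : vectType R) (eta : V -> R) :
  linmap (eta : V -> R^o) -> forall x y, eta (x - y) = eta x - eta y.
Proof. move=> h x y; exact: (linB h). Qed.

Section S.
Context (R : realType) (V : vectType R).
Implicit Types (br : V -> V -> V) (phi : V -> V) (xi : V) (eta : V -> R) (g : V -> V -> R).

Lemma brDl br : lie_bracket br -> forall x y z, br (x + y) z = br x z + br y z.
Proof. by case=> h _ x y z; have := h 1 x y z; rewrite !scale1r. Qed.
Lemma brDr br : lie_bracket br -> forall x y z, br z (x + y) = br z x + br z y.
Proof. by case=> _ [h _] x y z; have := h 1 x y z; rewrite !scale1r. Qed.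
Lemma brZl br : lie_bracket br -> forall a x z, br (a *: x) z = a *: br x z.
Proof.
move=> L; case: (L) => h _ a x z; have := h a x 0 z.
have -> : br 0 z = 0.
  have := brDl L 0 0 z; rewrite addr0 => e.
  have : br 0 z + br 0 z - br 0 z = br 0 z - br 0 z by rewrite -e.
  by rewrite addrK subrr.
by rewrite !addr0.
Qed.
Lemma brZr br : lie_bracket br -> forall a x z, br z (a *: x) = a *: br z x.
Proof.
move=> L; case: (L) => _ [h _] a x z; have := h a x 0 z.
have -> : br z 0 = 0.
  have := brDr L 0 0 z; rewrite addr0 => e.
  have : br z 0 + br z 0 - br z 0 = br z 0 - br z 0 by rewrite -e.
  by rewrite addrK subrr.
by rewrite !addr0.
Qed.
Lemma brxx br : lie_bracket br -> forall x, br x x = 0.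
Proof. by case=> _ [_ [h _]]. Qed.
Lemma brC br : lie_bracket br -> forall x y, br x y = - br y x.
Proof.
move=> L x y; have := brxx L (x + y).
rewrite (brDl L) !(brDr L) !(brxx L) add0r addr0 => /eqP.
by rewrite addr_eq0 => /eqP.
Qed.

Lemma gDl phi xi eta g : acm_structure phi xi eta g -> forall x y z, g (x + y) z = g x z + g y z.
Proof. by move=> S x y z; have := acm_g_lin S 1 x y z; rewrite scale1r mul1r. Qed.
Lemma gZl phi xi eta g : acm_structure phi xi eta g -> forall a x z, g (a *: x) z = a * g x z.
Proof.
move=> S a x z; have := acm_g_lin S a x 0 z.
have -> : g 0 z = 0.
  have := gDl S 0 0 z; rewrite addr0 => e.
  have : g 0 z + g 0 z - g 0 z = g 0 z - g 0 z by rewrite -e.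
  by rewrite addrK subrr.
by rewrite !addr0.
Qed.
Lemma gDr phi xi eta g : acm_structure phi xi eta g -> forall x y z, g z (x + y) = g z x + g z y.
Proof. by move=> S x y z; rewrite !(acm_g_sym S z) (gDl S). Qed.
Lemma gZr phi xi eta g : acm_structure phi xi eta g -> forall a x z, g z (a *: x) = a * g z x.
Proof. by move=> S a x z; rewrite !(acm_g_sym S z) (gZl S). Qed.

Lemma phi_xi phi xi eta g : acm_structure phi xi eta g -> phi xi = 0.
Proof.
move=> S.
have h2 : phi (phi xi) = 0 by rewrite (acm_phi2 S) (acm_eta_xi S) scale1r addNr.
have := acm_phi2 S (phi xi); rewrite h2 (lin0 (acm_phi_lin S)) (acm_eta_phi S) scale0r addr0.
by move/eqP; rewrite eq_sym oppr_eq0 => /eqP.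
Qed.
Lemma g_xi phi xi eta g : acm_structure phi xi eta g -> forall x, g x xi = eta x.
Proof.
move=> S x; have := acm_compat S x xi; rewrite (phi_xi S) (acm_eta_xi S) mulr1.
rewrite -(scale0r 0) (gZr S) mul0r => /eqP; rewrite eq_sym subr_eq0 => /eqP.
by [].
Qed.
Lemma eta_h phi xi eta g : acm_structure phi xi eta g -> forall x, eta (x - eta x *: xi) = 0.
Proof.
move=> S x; rewrite (etaB (acm_eta_lin S)) (etaZ (acm_eta_lin S)) (acm_eta_xi S).
by rewrite mulr1 subrr.
Qed.
End S.

Lemma fwd (R : realType) (V1 V2 : vectType R)
  (br1 : V1 -> V1 -> V1) (phi1 : V1 -> V1) (xi1 : V1) (eta1 : V1 -> R) (g1 : V1 -> V1 -> R)
  (br2 : V2 -> V2 -> V2) (phi2 : V2 -> V2) (xi2 : V2) (eta2 : V2 -> R) (g2 : V2 -> V2 -> R) :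
  coKahler_iso br1 phi1 xi1 eta1 g1 br2 phi2 xi2 eta2 g2 ->
  kahler_iso_D br1 phi1 xi1 eta1 g1 br2 phi2 xi2 eta2 g2.
Proof.
case=> Psi [lin bij hbr hphi [heta hxi hg]]; exists Psi; split.
- by move=> x e; rewrite heta.
- by move=> a x y _ _; apply: lin.
- split; first by move=> x y _ _; apply: (bij_inj bij).
  move=> y ey; case: bij => Q c1 c2; exists (Q y); last exact: c2.
  by rewrite -heta c2.
- by move=> x y _ _; apply: hbr.
- split; move=> *; [exact: hphi | exact: hg | by rewrite hbr hxi].
Qed.

Lemma bwd (R : realType) (V1 V2 : vectType R)
  (br1 : V1 -> V1 -> V1) (phi1 : V1 -> V1) (xi1 : V1) (eta1 : V1 -> R) (g1 : V1 -> V1 -> R)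
  (br2 : V2 -> V2 -> V2) (phi2 : V2 -> V2) (xi2 : V2) (eta2 : V2 -> R) (g2 : V2 -> V2 -> R) :
  lie_bracket br1 -> lie_bracket br2 ->
  acm_structure phi1 xi1 eta1 g1 -> acm_structure phi2 xi2 eta2 g2 ->
  (forall x y, eta1 (br1 x y) = 0) ->
  kahler_iso_D br1 phi1 xi1 eta1 g1 br2 phi2 xi2 eta2 g2 ->
  coKahler_iso br1 phi1 xi1 eta1 g1 br2 phi2 xi2 eta2 g2.
Proof.
move=> L1 L2 S1 S2 ebr [psi [hmap hlin [hinj hsurj] hbr [hphi hg hD]]].
have eL1 := acm_eta_lin S1; have eL2 := acm_eta_lin S2.
have pL1 := acm_phi_lin S1; have pL2 := acm_phi_lin S2.
have psiD : forall x y, eta1 x = 0 -> eta1 y = 0 -> psi (x + y) = psi x + psi y.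
  by move=> x y ex ey; have := hlin 1 x y ex ey; rewrite !scale1r.
have psi0 : psi 0 = 0.
  have := psiD 0 0 (lin0 eL1) (lin0 eL1); rewrite addr0 => e.
  have : psi 0 + psi 0 - psi 0 = psi 0 - psi 0 by rewrite -e.
  by rewrite addrK subrr.
have psiZ : forall a x, eta1 x = 0 -> psi (a *: x) = a *: psi x.
  by move=> a x ex; have := hlin a x 0 ex (lin0 eL1); rewrite !addr0 psi0 addr0.
pose Psi x := psi (x - eta1 x *: xi1) + eta1 x *: xi2.
have PsiH : forall z, eta1 z = 0 -> Psi z = psi z.
  by move=> z ez; rewrite /Psi ez !scale0r subr0 addr0.
have hdec : forall x, x = (x - eta1 x *: xi1) + eta1 x *: xi1 by move=> x; rewrite subrK.
exists Psi; split.
-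
  move=> a x y; rewrite /Psi (etaD eL1) (etaZ eL1).
  have -> : a *: x + y - (a * eta1 x + eta1 y) *: xi1
          = a *: (x - eta1 x *: xi1) + (y - eta1 y *: xi1).
    by rewrite scalerDl opprD addrACA scalerBr scalerA.
  rewrite hlin ?(eta_h S1) // scalerDr scalerDl scalerA.
  by rewrite addrACA.
-
  have surjh : forall y, exists x, eta1 x = 0 /\ psi x = y - eta2 y *: xi2.
    move=> y; have [x ex px] := hsurj _ (eta_h S2 y); by exists x.
  pose Q y := proj1_sig (constructive_indefinite_description _ (surjh y)) + eta2 y *: xi1.
  exists Q.
  + move=> x; rewrite /Q; case: constructive_indefinite_description => x0 [e0 p0] /=.
    have ePx : eta2 (Psi x) = eta1 x.
      by rewrite /Psi (etaD eL2) (etaZ eL2) (hmap _ (eta_h S1 x)) (acm_eta_xi S2) mulr1 add0r.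
    move: p0; rewrite ePx /Psi addrK => p0.
    by rewrite (hinj _ _ e0 (eta_h S1 x) p0) subrK.
  + move=> y; rewrite /Q; case: constructive_indefinite_description => x0 [e0 p0] /=.
    rewrite /Psi (etaD eL1) (etaZ eL1) e0 (acm_eta_xi S1) mulr1 add0r addrK p0.
    by rewrite subrK.
-
  move=> x y; rewrite (PsiH _ (ebr x y)) {1}(hdec x) {1}(hdec y) /Psi.
  set hx := x - _; set hy := y - _; set a := eta1 x; set b := eta1 y.
  have ehx : eta1 hx = 0 by rewrite /hx (eta_h S1).
  have ehy : eta1 hy = 0 by rewrite /hy (eta_h S1).
  clearbody hx hy a b.
  rewrite (brDl L1) !(brDr L1) !(brZl L1) !(brZr L1) (brxx L1) !scaler0 addr0.
  rewrite (brDl L2) !(brDr L2) !(brZl L2) !(brZr L2) (brxx L2) !scaler0 addr0.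
  rewrite (brC L1 hx xi1) (brC L2 (psi hx) xi2).
  have ez : forall c u v, eta1 (c *: br1 u v) = 0.
    by move=> c u v; rewrite (etaZ eL1) ebr mulr0.
  have ezN : forall u v, eta1 (- br1 u v) = 0.
    by move=> u v; rewrite -scaleN1r ez.
  have ezz : forall c u v, eta1 (c *: - br1 u v) = 0.
    by move=> c u v; rewrite -scaleN1r scalerA ez.
  rewrite psiD ?(etaD eL1) ?ebr ?ez ?add0r //.
  rewrite psiD ?ebr ?ez //.
  rewrite !psiZ ?ebr ?ezN //.
  rewrite -scaleN1r psiZ ?ebr // hbr // hD // scaleN1r.
  rewrite hD //.
-
  move=> x; rewrite (PsiH _ (acm_eta_phi S1 x)) {1}(hdec x) /Psi.
  rewrite (linD pL1) (linZ pL1) (phi_xi S1) scaler0 addr0 hphi ?(eta_h S1) //.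
  by rewrite (linD pL2) (linZ pL2) (phi_xi S2) scaler0 addr0.
- split.
  + move=> x; rewrite /Psi (etaD eL2) (etaZ eL2) (hmap _ (eta_h S1 x)) (acm_eta_xi S2).
    by rewrite mulr1 add0r.
  + by rewrite /Psi (acm_eta_xi S1) scale1r subrr psi0 add0r scale1r.
  + move=> x y; rewrite {2}(hdec x) {2}(hdec y) /Psi.
    set hx := x - _; set hy := y - _; set a := eta1 x; set b := eta1 y.
    have ehx : eta1 hx = 0 by rewrite /hx (eta_h S1).
    have ehy : eta1 hy = 0 by rewrite /hy (eta_h S1).
  clearbody hx hy a b.
    rewrite !(gDl S1) !(gDr S1) !(gZl S1) !(gZr S1).
    rewrite !(gDl S2) !(gDr S2) !(gZl S2) !(gZr S2).
    rewrite !(g_xi S1) !(g_xi S2) (acm_g_sym S1 xi1) (acm_g_sym S2 xi2) !(g_xi S1) !(g_xi S2).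
    by rewrite !hmap // ehx ehy hg // (acm_eta_xi S1) (acm_eta_xi S2).
Qed.

Theorem mainTheorem9 (R : realType) (alpha : R) (n1 n2 : nat)
  (V1 : vectType R) (br1 : V1 -> V1 -> V1) (phi1 : V1 -> V1) (xi1 : V1)
  (eta1 : V1 -> R) (g1 : V1 -> V1 -> R)
  (V2 : vectType R) (br2 : V2 -> V2 -> V2) (phi2 : V2 -> V2) (xi2 : V2)
  (eta2 : V2 -> R) (g2 : V2 -> V2 -> R) :
  lie_bracket br1 -> lie_bracket br2 ->
  ((almost_alpha_coKahler alpha n1 br1 phi1 xi1 eta1 g1 ->
    almost_alpha_coKahler alpha n2 br2 phi2 xi2 eta2 g2 ->
    (coKahler_iso br1 phi1 xi1 eta1 g1 br2 phi2 xi2 eta2 g2 <->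
     kahler_iso_D br1 phi1 xi1 eta1 g1 br2 phi2 xi2 eta2 g2)) /\
   (alpha_coKahler alpha n1 br1 phi1 xi1 eta1 g1 ->
    alpha_coKahler alpha n2 br2 phi2 xi2 eta2 g2 ->
    (coKahler_iso br1 phi1 xi1 eta1 g1 br2 phi2 xi2 eta2 g2 <->
     kahler_iso_D br1 phi1 xi1 eta1 g1 br2 phi2 xi2 eta2 g2))).
Proof.
move=> L1 L2.
have H : almost_alpha_coKahler alpha n1 br1 phi1 xi1 eta1 g1 ->
    almost_alpha_coKahler alpha n2 br2 phi2 xi2 eta2 g2 ->
    (coKahler_iso br1 phi1 xi1 eta1 g1 br2 phi2 xi2 eta2 g2 <->
     kahler_iso_D br1 phi1 xi1 eta1 g1 br2 phi2 xi2 eta2 g2).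
  case=> _ S1 _ d1 _; case=> _ S2 _ _ _; split; first exact: fwd.
  apply: bwd => // x y; have := d1 x y; rewrite /d1 => /eqP.
  by rewrite oppr_eq0 => /eqP.
by split => // [[A1 _] [A2 _]]; apply: H.
Qed.
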